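(* Let $\lambda>0$, let $G=(V,W)$ be a weighted graph with $N$ vertices, let $R\ge 1$, and let $C\subset\mathbb{M}_{N\times R}(\mathbb{R})$ be a nonempty closed convex set. Let $F^k=[f^k_1,\dots,f^k_R]\in C$, and assume $B^k_r:=B(f^k_r)\neq 0$ for all $r$. Set $E^k_r=T(f^k_r)/B^k_r$, let $\Delta^k>0$, and define $c^k_r=\Delta^k/B^k_r$, $d^k_r=\Delta^k E^k_r/B^k_r$, and the convex functions on $\mathbb{M}_{N\times R}(\mathbb{R})$ $$\mathcal{T}^k(F)=\sum_{r=1}^R c^k_r\,T(f_r),\qquad \mathcal{B}^k(F)=\sum_{r=1}^R d^k_r\,B(f_r),\qquad F=[f_1,\dots,f_R].$$ Let $V^k\in\partial\mathcal{B}^k(F^k)$ and define $$F^{k+1}=\operatorname*{argmin}_{F\in C}\ \mathcal{T}^k(F)+\tfrac12\|F-(F^k+V^k)\|_F^2 .$$ Then $F^{k+1}\in C$, and if moreover $B^{k+1}_r:=B(f^{k+1}_r)\neq0$ for all $r$ (so that $E^{k+1}_r:=T(f^{k+1}_r)/B^{k+1}_r$ is defined), then $$\sum_{r=1}^R\frac{B^{k+1}_r}{B^k_r}\bigl(E^k_r-E^{k+1}_r\bigr)\ \ge\ \frac{\|F^k-F^{k+1}\|_F^2}{\Delta^k}.$$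
   Context: The graph $G=(V,W)$ has vertex set $V=\{\mathbf{x}_1,\dots,\mathbf{x}_N\}$ and symmetric matrix $W=(w_{ij})$ with $w_{ij}\ge0$; functions on $V$ are identified with vectors in $\mathbb{R}^N$, $\mathbf{1}$ is the all-ones vector, and $\|\cdot\|_F$ is the Frobenius norm, with $\langle\cdot,\cdot\rangle$ the Frobenius inner product. - $T(f)=\|f\|_{TV}=\sum_{i=1}^N\sum_{j=1}^N w_{ij}|f(\mathbf{x}_i)-f(\mathbf{x}_j)|$. - $B(f)=\|f-\mathrm{med}_\lambda(f)\mathbf{1}\|_{1,\lambda}$, where $\|h\|_{1,\lambda}=\sum_i|h_i|_\lambda$ with $|t|_\lambda=\lambda t$ for $t\ge0$ and $|t|_\lambda=-t$ for $t<0$, and $\mathrm{med}_\lambda(f)$ is the $(k+1)$-st largest entry of $f$ counted with multiplicity, $k=\lfloor N/(\lambda+1)\rfloor$. - $T$ and $B$ are convex and nonnegative, so $c^k_r,d^k_r\ge0$ and $\mathcal{T}^k,\mathcal{B}^k$ are convex; $\partial$ denotes the convex subdifferential. The minimizer defining $F^{k+1}$ exists and is unique by strong convexity (it is the proximal operator of $\mathcal{T}^k+\delta_C$ applied to $F^k+V^k$, where $\delta_C$ is $0$ on $C$ and $+\infty$ off $C$). - In the paper, $C$ is either the simplex set $\Sigma=\{F\in\mathbb{M}_{N\times R}([0,1]): \sum_{r}f_r(\mathbf{x}_i)=1\ \forall i\}$ or its intersection with a label constraint set, but the result only uses that $C$ is nonempty, closed and convex. *)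

(* Defs.v *)
(* Scalars: an arbitrary Archimedean real field R
   (generalizes the real numbers; the floor is needed for med_lambda). *)
From HB Require Import structures.
From mathcomp Require Import all_boot all_order all_algebra.
Set Implicit Arguments. Unset Strict Implicit. Unset Printing Implicit Defensive.
Import Order.TTheory GRing.Theory Num.Theory.
Local Open Scope ring_scope.

Section Defs.
Variable R : archiRealFieldType.

Definition TV (N : nat) (W : 'M[R]_N) (f : 'cV[R]_N) : R :=
  \sum_(i < N) \sum_(j < N) W i j * `|f i 0 - f j 0|.

Definition abs_lam (lam t : R) : R := if 0 <= t then lam * t else - t.

Definition med_index (lam : R) (N : nat) : nat :=
  `|Num.floor (N%:R / (lam + 1))|%N.

(* med_lambda f = the (k+1)-st largest entry of f, counted with multiplicity *)
Definition med_lam (lam : R) (N : nat) (f : 'cV[R]_N) : R :=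
  nth 0 (sort (fun x y : R => y <= x) [seq f i 0 | i <- enum 'I_N])
      (med_index lam N).

Definition Bal (lam : R) (N : nat) (f : 'cV[R]_N) : R :=
  \sum_(i < N) abs_lam lam (f i 0 - med_lam lam f).

Definition frob_dot (m n : nat) (A B : 'M[R]_(m, n)) : R :=
  \sum_(i < m) \sum_(j < n) A i j * B i j.
Definition frob_norm2 (m n : nat) (A : 'M[R]_(m, n)) : R := frob_dot A A.

Definition convex_set (m n : nat) (C : 'M[R]_(m, n) -> Prop) : Prop :=
  forall A B, C A -> C B -> forall t : R, 0 <= t -> t <= 1 ->
    C (t *: A + (1 - t) *: B).

Definition subgrad (m n : nat) (phi : 'M[R]_(m, n) -> R) (X V : 'M[R]_(m, n))
  : Prop := forall Y, phi X + frob_dot V (Y - X) <= phi Y.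

Definition is_argmin (m n : nat) (C : 'M[R]_(m, n) -> Prop)
  (phi : 'M[R]_(m, n) -> R) (X : 'M[R]_(m, n)) : Prop :=
  C X /\ forall Y, C Y -> phi X <= phi Y.

End Defs.

(* Main.v *)
Require Import Defs.
From HB Require Import structures.
From mathcomp Require Import all_boot all_order all_algebra.
From mathcomp Require Import ring lra.
Import Order.TTheory GRing.Theory Num.Theory.
Local Open Scope ring_scope.

Set Implicit Arguments.
Section H.
Variable R : archiRealFieldType.

Lemma fdotDl m n (A B C : 'M[R]_(m,n)) :
  frob_dot (A + B) C = frob_dot A C + frob_dot B C.
Proof.
rewrite /frob_dot -big_split; apply: eq_bigr => i _.
rewrite -big_split; apply: eq_bigr => j _; by rewrite !mxE mulrDl.
Qed.

Lemma fdotZl m n (t : R) (A C : 'M[R]_(m,n)) :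
  frob_dot (t *: A) C = t * frob_dot A C.
Proof.
rewrite /frob_dot mulr_sumr; apply: eq_bigr => i _.
rewrite mulr_sumr; apply: eq_bigr => j _; rewrite !mxE; ring.
Qed.

Lemma fdotNl m n (A C : 'M[R]_(m,n)) :
  frob_dot (- A) C = - frob_dot A C.
Proof.
rewrite /frob_dot -sumrN; apply: eq_bigr => i _.
rewrite -sumrN; apply: eq_bigr => j _; rewrite !mxE; ring.
Qed.

Lemma fdotC m n (A C : 'M[R]_(m,n)) : frob_dot A C = frob_dot C A.
Proof.
rewrite /frob_dot; apply: eq_bigr => i _; apply: eq_bigr => j _; ring.
Qed.

Lemma fdotDr m n (A B C : 'M[R]_(m,n)) :
  frob_dot C (A + B) = frob_dot C A + frob_dot C B.
Proof. by rewrite fdotC fdotDl !(fdotC C). Qed.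

Lemma fdotZr m n (t : R) (A C : 'M[R]_(m,n)) :
  frob_dot C (t *: A) = t * frob_dot C A.
Proof. by rewrite fdotC fdotZl fdotC. Qed.

Lemma fdotNr m n (A C : 'M[R]_(m,n)) :
  frob_dot C (- A) = - frob_dot C A.
Proof. by rewrite fdotC fdotNl fdotC. Qed.

Lemma fnorm_exp m n (X D : 'M[R]_(m,n)) t :
  frob_norm2 (X + t *: D) = frob_norm2 X + 2 * t * frob_dot X D + t ^+ 2 * frob_norm2 D.
Proof.
rewrite /frob_norm2 fdotDl !fdotDr !fdotZl !fdotZr (fdotC D X); ring.
Qed.

Lemma limit0 (a b : R) : (forall t, 0 < t -> t <= 1 -> 0 <= a + t * b) -> 0 <= a.
Proof.
move=> H; case: (lerP 0 a) => // ha.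
case: (lerP b 0) => hb.
  have := H 1 ltr01 (lexx _); lra.
set t := - a / (2 * b).
have tb : t * b = - a / 2 by rewrite /t; field; lra.
have tp : 0 < t by rewrite /t; apply: divr_gt0; lra.
case: (lerP t 1) => t1.
  have := H t tp t1; lra.
have : 1 * (2 * b) < t * (2 * b) by rewrite ltr_pM2r //; lra.
have := H 1 ltr01 (lexx _); lra.
Qed.

Lemma Bal_ge0 lam N (f : 'cV[R]_N) : 0 < lam -> 0 <= Bal lam f.
Proof.
move=> hl; rewrite /Bal; apply: sumr_ge0 => i _; rewrite /abs_lam.
case: ifP => h; last by move/negbT: h; rewrite -ltNge => h; lra.
by apply: mulr_ge0; lra.
Qed.

Lemma TV_convex N (W : 'M[R]_N) (A B : 'cV[R]_N) t :
  (forall i j, 0 <= W i j) -> 0 <= t -> t <= 1 ->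
  TV W (t *: A + (1 - t) *: B) <= t * TV W A + (1 - t) * TV W B.
Proof.
move=> hW h0 h1; rewrite /TV !mulr_sumr -big_split; apply: ler_sum => i _.
rewrite !mulr_sumr -big_split; apply: ler_sum => j _.
rewrite !mxE.
have e : t * A i 0 + (1 - t) * B i 0 - (t * A j 0 + (1 - t) * B j 0)
   = t * (A i 0 - A j 0) + (1 - t) * (B i 0 - B j 0) by ring.
rewrite e.
apply: le_trans (_ : W i j * (t * `|A i 0 - A j 0| + (1 - t) * `|B i 0 - B j 0|) <= _).
  apply: ler_wpM2l => //; apply: le_trans (ler_normD _ _) _.
  rewrite !normrM (ger0_norm h0) (ger0_norm (_ : 0 <= 1 - t)) //; lra.
by rewrite le_eqVlt; apply/orP; left; apply/eqP; rewrite mulrDr !mulrA ![W i j * _]mulrC.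
Qed.

End H.
Unset Implicit Arguments.
Arguments fdotC {R m n}.
Arguments limit0 {R}.

Theorem theorem3 (R : archiRealFieldType) (lam : R) (N Rr : nat)
  (W : 'M[R]_N) (C : 'M[R]_(N, Rr) -> Prop) (Fk Vk Fk1 : 'M[R]_(N, Rr))
  (Delta : R) :
  0 < lam ->
  W^T = W -> (forall i j, 0 <= W i j) ->
  (0 < Rr)%N ->
  convex_set C ->
  C Fk ->
  (forall r, Bal lam (col r Fk) != 0) ->
  0 < Delta ->
  let Bk r := Bal lam (col r Fk) in
  let Ek r := TV W (col r Fk) / Bk r in
  let c r := Delta / Bk r in
  let d r := Delta * Ek r / Bk r in
  let calT F := \sum_(r < Rr) c r * TV W (col r F) in
  let calB F := \sum_(r < Rr) d r * Bal lam (col r F) in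
  subgrad calB Fk Vk ->
  is_argmin C (fun F => calT F + 2^-1 * frob_norm2 (F - (Fk + Vk))) Fk1 ->
  C Fk1 /\
  ((forall r, Bal lam (col r Fk1) != 0) ->
   let Bk1 r := Bal lam (col r Fk1) in
   let Ek1 r := TV W (col r Fk1) / Bk1 r in
   \sum_(r < Rr) Bk1 r / Bk r * (Ek r - Ek1 r) >= frob_norm2 (Fk - Fk1) / Delta).
Proof.
move=> hl _ hW _ hC CFk hBk hD Bk Ek c d calT calB Hsub [CF Hmin].
split => //; move=> hB1 /=.
set F := Fk1 in CF Hmin hB1 *.
set D := Fk - F.
set X := F - (Fk + Vk).
have Bkp r : 0 < Bk r.
  by rewrite lt_def hBk Bal_ge0.
have cp r : 0 <= c r by apply: divr_ge0; [lra | exact: ltW].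
have Tconv t : 0 <= t -> t <= 1 ->
    calT (t *: Fk + (1 - t) *: F) <= t * calT Fk + (1 - t) * calT F.
  move=> h0 h1; rewrite /calT !mulr_sumr -big_split; apply: ler_sum => r _.
  have -> : col r (t *: Fk + (1 - t) *: F) = t *: col r Fk + (1 - t) *: col r F.
    by apply/matrixP => i j; rewrite !mxE.
  have h := ler_wpM2l (cp r) (@TV_convex R N W (col r Fk) (col r F) t hW h0 h1).
  apply: (le_trans h).
  by rewrite le_eqVlt; apply/orP; left; apply/eqP; rewrite mulrDr (mulrCA (c r) t) (mulrCA (c r) (1 - t)).
(* first-order condition *)
have key : 0 <= calT Fk - calT F + frob_dot X D.
  apply: (limit0 _ (frob_norm2 D / 2)) => t t0 t1.
  have CY := hC Fk F CFk CF t (ltW t0) t1.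
  have := Hmin _ CY.
  have -> : t *: Fk + (1 - t) *: F - (Fk + Vk) = X + t *: D.
    by rewrite /X /D scalerBl scale1r scalerBr; apply/matrixP => i j; rewrite !mxE; ring.
  rewrite -/X fnorm_exp.
  have := Tconv t (ltW t0) t1.
  move=> h1 h2.
  have h3 : 0 <= t * (calT Fk - calT F + frob_dot X D + t * (frob_norm2 D / 2)) by nra.
  by move: h3; rewrite pmulr_rge0.
have eXD : frob_dot X D = - frob_norm2 D - frob_dot Vk D.
  have -> : X = - D - Vk by rewrite /X /D; apply/matrixP => i j; rewrite !mxE; ring.
  by rewrite /frob_norm2 fdotDl fdotNl fdotNl.
have hs := Hsub F.
have eVD : frob_dot Vk (F - Fk) = - frob_dot Vk D.
  have -> : F - Fk = - D by rewrite /D opprB.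
  by rewrite fdotNr.
rewrite eVD in hs.
have eTB : calT Fk = calB Fk.
  rewrite /calT /calB; apply: eq_bigr => r _.
  rewrite /c /d /Ek -/(Bk r); field; exact: hBk.
have hmain : frob_norm2 D <= calB F - calT F by lra.
have eS : (\sum_(r < Rr) Bal lam (col r F) / Bk r * (Ek r - TV W (col r F) / Bal lam (col r F))) * Delta = calB F - calT F.
  rewrite /calB /calT -sumrB mulr_suml; apply: eq_bigr => r _.
  rewrite /d /c /Ek; field.
  by apply/andP; split; [exact: hBk | exact: hB1].
by rewrite ler_pdivrMr // eS.
Qed.
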